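(* Let $A\in\mathbb{R}^{2\times2}$ be such that $(e^{t(A-s(A))})_{t\ge0}$ is bounded. If the semigroup $(e^{tA})_{t\ge0}$ is asymptotically positive, then it is positive.
   Context: $\mathbb{C}^2$ carries the coordinatewise order; $d_+(f)=\operatorname{dist}(f,\mathbb{C}^2_+)$; $s(A)$ is the spectral bound. The semigroup is asymptotically positive if $d_+(e^{t(A-s(A))}f)\to0$ as $t\to\infty$ for every $f\ge0$; positive means every $e^{tA}$ has non-negative entries. *)

(* Defs.v *)
From HB Require Import structures.
From mathcomp Require Import all_boot all_order all_algebra.
From mathcomp Require Import complex.
From mathcomp Require Import all_classical all_reals all_analysis.
Set Implicit Arguments. Unset Strict Implicit. Unset Printing Implicit Defensive.
Import Order.TTheory GRing.Theory Num.Theory.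
Import numFieldNormedType.Exports.
Local Open Scope classical_set_scope.
Local Open Scope ring_scope.

Definition expmx (R : realType) (n : nat) (M : 'M[R]_n.+1) : 'M[R]_n.+1 :=
  limn (fun N : nat => \sum_(k < N) (k`!%:R)^-1 *: M ^+ k).

Definition complexify (R : realType) (n : nat) (M : 'M[R]_n) : 'M[R[i]]_n :=
  map_mx (fun x : R => (x%:C)%C) M.

Definition spectral_bound (R : realType) (n : nat) (A : 'M[R]_n) : R :=
  sup [set complex.Re z | z in [set z : R[i] | eigenvalue (complexify A) z]].

Definition nonneg_vec (R : realType) (n : nat) (f : 'cV[R]_n) : Prop :=
  forall i, 0 <= f i 0.

Definition dpos (R : realType) (n : nat) (f : 'cV[R]_n) : R :=
  inf [set `|f - g| | g in [set g : 'cV[R]_n | nonneg_vec g]].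

Definition positive_semigroup (R : realType) (n : nat) (A : 'M[R]_n.+1) : Prop :=
  forall t : R, 0 <= t -> forall i j, 0 <= expmx (t *: A) i j.

Definition rescaled_bounded (R : realType) (n : nat) (A : 'M[R]_n.+1) : Prop :=
  exists M : R, forall t : R, 0 <= t ->
    `|expmx (t *: (A - (spectral_bound A)%:M))| <= M.

Definition asymptotically_positive (R : realType) (n : nat) (A : 'M[R]_n.+1) : Prop :=
  forall f : 'cV[R]_n.+1, nonneg_vec f ->
    dpos (expmx (t *: (A - (spectral_bound A)%:M)) *m f) @[t --> +oo] --> 0.

(* Main.v *)
Require Import Defs.
From HB Require Import structures.
From mathcomp Require Import all_boot all_order all_algebra.
From mathcomp Require Import complex.
From mathcomp Require Import all_classical all_reals all_analysis.
From mathcomp Require Import ring lra.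
Import Order.TTheory GRing.Theory Num.Theory.
Import numFieldNormedType.Exports.
Local Open Scope classical_set_scope.
Local Open Scope ring_scope.
Lemma det2 (F : comNzRingType) (M : 'M[F]_2) : \det M = M 0 0 * M 1 1 - M 0 1 * M 1 0.
Proof.
rewrite (expand_det_row _ 0) !big_ord_recl big_ord0 /cofactor !det_mx11 !mxE /=.
rewrite addr0 expr0 expr1 !mul1r mulN1r mulrN.
congr (M _ _ * M _ _ - M _ _ * M _ _); exact/val_inj.
Qed.

Lemma eig_det (F : fieldType) n (M : 'M[F]_n) a :
  eigenvalue M a = (\det (a%:M - M) == 0).
Proof.
apply/eigenvalueP/det0P=> [[v Av_av v_nz] | [v v_nz Av_av]]; exists v => //.
  by rewrite mulmxBr Av_av mul_mx_scalar subrr.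
by apply/eqP; rewrite -mul_mx_scalar eq_sym -subr_eq0 -mulmxBr Av_av.
Qed.

Lemma eig2 (F : fieldType) (M : 'M[F]_2) z :
  eigenvalue M z = ((z - M 0 0) * (z - M 1 1) - M 0 1 * M 1 0 == 0).
Proof.
by rewrite eig_det det2 !mxE /= !mulr1n !mulr0n !sub0r mulrNN.
Qed.

Section S.
Variable R : realType.

Lemma expmx_comb (M U V : 'M[R]_2) (a b : R^nat) (la lb : R) :
 (forall k, (k`!%:R)^-1 *: M ^+ k = a k *: U + b k *: V) ->
 series a @ \oo --> la -> series b @ \oo --> lb -> expmx M = la *: U + lb *: V.
Proof.
move=> HM ha hb; rewrite /expmx.
have -> : (fun N : nat => \sum_(k < N) (k`!%:R)^-1 *: M ^+ k) =
   (fun N => series a N *: U + series b N *: V).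
  apply/funext => N; under eq_bigr do rewrite HM.
  by rewrite big_split /= -!scaler_suml /series /= !big_mkord.
apply: cvg_lim => //; apply: cvgD; apply: cvgZ => //; exact: cvg_cst.
Qed.

Lemma series_expR (x : R) : series (exp_coeff x) @ \oo --> expR x.
Proof. by have := is_cvg_series_exp_coeff x; rewrite /expR. Qed.

Lemma expmx_PQ (P Q : 'M[R]_2) (x y : R) : P * Q = 0 -> Q * P = 0 -> P + Q = 1 ->
  expmx (x *: P + y *: Q) = expR x *: P + expR y *: Q.
Proof.
move=> PQ QP PQ1.
have PP : P * P = P by rewrite -[RHS]mulr1 -PQ1 mulrDr PQ addr0.
have QQ : Q * Q = Q by rewrite -[RHS]mulr1 -PQ1 mulrDr QP add0r.
have pw : forall k, (x *: P + y *: Q) ^+ k = x ^+ k *: P + y ^+ k *: Q.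
  elim=> [|k IH]; first by rewrite !expr0 !scale1r.
  rewrite exprSr IH mulrDl !mulrDr -!scalerAl -!scalerAr !scalerA PP QQ PQ QP.
  by rewrite !scaler0 addr0 add0r -!exprSr.
apply: expmx_comb; last 2 first.
- exact: series_expR.
- exact: series_expR.
move=> k; rewrite pw scalerDr !scalerA /exp_coeff /=.
by rewrite ![_^-1 * _]mulrC.
Qed.

Lemma expmx_rot (B : 'M[R]_2) (w t : R) : w != 0 -> B * B = (- w ^+ 2) *: 1 ->
  expmx (t *: B) = cos (w * t) *: 1 + sin (w * t) *: (w^-1 *: B).
Proof.
move=> w0 BB.
have pe : forall m, B ^+ (m.*2) = (- w ^+ 2) ^+ m *: 1.
  elim=> [|m IH]; first by rewrite expr0 scale1r.
  rewrite doubleS !exprS IH mulrA BB -scalerAl mul1r -scalerAr mulr1.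
  by rewrite scalerA.
apply: expmx_comb; last 2 first.
- rewrite cos.unlock; exact: is_cvg_series_cos_coeff.
- rewrite sin.unlock; exact: is_cvg_series_sin_coeff.
move=> k; rewrite exprZn -(odd_double_half k); move: (k./2) => m.
have e : (- w ^+ 2) ^+ m = (-1) ^+ m * w ^+ (m.*2).
  by rewrite -[- _]mulN1r exprMn -muln2 mulnC exprM.
case: (odd k) => /=; rewrite ?add0n ?add1n.
- rewrite [B ^+ _]exprSr pe -scalerAl mul1r.
  rewrite /cos_coeff /sin_coeff /= odd_double /= !mul0r scale0r add0r.
  rewrite doubleK !scalerA mul1r; congr (_ *: _).
  rewrite e !exprMn !exprSr; field; by rewrite w0 pnatr_eq0 -lt0n fact_gt0.
- rewrite pe /cos_coeff /sin_coeff /= odd_double /= !mul0r scale0r addr0.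
  rewrite half_double !scalerA mul1r; congr (_ *: _).
  rewrite e !exprMn -exprnP; field; by rewrite pnatr_eq0 -lt0n fact_gt0.
Qed.

Lemma expmx_nil (N : 'M[R]_2) (t : R) : N * N = 0 ->
  expmx (t *: N) = 1 + t *: N.
Proof.
move=> NN.
rewrite -[1 + _](_ : expR 0 *: 1 + t *: N = _); last by rewrite expR0 scale1r.
apply: (@expmx_comb _ _ _ (exp_coeff 0) (fun k => t * (k == 1)%:R)); last 2 first.
- exact: series_expR.
- apply: cvg_near_cst; exists 2%N => // n /=.
  case: n => [|[|n]] // _.
  rewrite /series /= !big_nat_recl // big1 ?addr0; last by move=> i _; rewrite mulr0.
  by rewrite mulr0 add0r mulr1.
move=> k; rewrite exprZn; case: k => [|[|k]].
- by rewrite /exp_coeff /= !expr0 fact0 invr1 !scale1r mulr0 scale0r addr0 mulr1 scale1r.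
- by rewrite /exp_coeff /= !expr1 invr1 !scale1r mulr1 scale0r add0r mulr1.
- have -> : N ^+ k.+2 = 0 by rewrite exprS exprS mulrA NN mul0r.
  rewrite !scaler0 /exp_coeff /= expr0n /= mul0r scale0r.
  by rewrite mulr0 scale0r addr0.
Qed.

Lemma eig_cx (A : 'M[R]_2) (r1 r2 : R[i]) :
  r1 + r2 = ((A 0 0 + A 1 1)%:C)%C -> r1 * r2 = ((A 0 0 * A 1 1 - A 0 1 * A 1 0)%:C)%C ->
  forall z, eigenvalue (complexify A) z <-> (z = r1 \/ z = r2).
Proof.
move=> hs hp z; rewrite eig2 /complexify !mxE.
rewrite (_ : _ * _ - _ = z ^+ 2 - ((A 0 0 + A 1 1)%:C)%C * z +
   ((A 0 0 * A 1 1 - A 0 1 * A 1 0)%:C)%C); last first.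
  by rewrite rmorphD rmorphB !rmorphM /=; ring.
rewrite -hs -hp (_ : _ - _ + _ = (z - r1) * (z - r2)); last by ring.
rewrite mulf_eq0 !subr_eq0; split; first by case/orP => /eqP; auto.
by case=> ->; rewrite eqxx ?orbT.
Qed.

Lemma sb_val (A : 'M[R]_2) (r1 r2 : R[i]) :
  r1 + r2 = ((A 0 0 + A 1 1)%:C)%C -> r1 * r2 = ((A 0 0 * A 1 1 - A 0 1 * A 1 0)%:C)%C ->
  complex.Re r2 <= complex.Re r1 -> spectral_bound A = complex.Re r1.
Proof.
move=> hs hp hle; rewrite /spectral_bound.
set S := (X in sup X).
have HS : forall x, S x <-> (x = complex.Re r1 \/ x = complex.Re r2).
  move=> x; split.
    by case=> z /= /(@eig_cx A r1 r2 hs hp) [] -> <-; auto.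
  by case=> ->; [exists r1 | exists r2] => //=; apply/(@eig_cx A r1 r2 hs hp); auto.
have ub : ubound S (complex.Re r1) by move=> x /HS [] ->.
have ne : S (complex.Re r1) by apply/HS; left.
apply/le_anti/andP; split.
  by apply: ge_sup => //; exists (complex.Re r1).
by apply: sup_upper_bound => //; split; [exists (complex.Re r1) | exists (complex.Re r1)].
Qed.

Lemma entry_le_norm m n (M : 'M[R]_(m, n)) i j : `|M i j| <= `|M|.
Proof.
rewrite [X in _ <= X]/Num.norm /= mx_normrE.
exact: (le_bigmax _ _ (i, j)).
Qed.

Lemma dpos_ge (f : 'cV[R]_2) i : - f i 0 <= dpos f.
Proof.
apply: lb_le_inf.
  by exists `|f - 0|, 0 => //; move=> k; rewrite mxE.
move=> _ [g gpos <-].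
apply: le_trans; last exact: (@entry_le_norm _ _ (f - g) i 0).
rewrite !mxE -normrN opprB; apply: le_trans; last exact: ler_norm.
by rewrite lerDr; apply: gpos.
Qed.

Definition mk2 (a b c d : R) : 'M[R]_2 := \matrix_(i, j)
  (if (i : nat) == 0%N then (if (j : nat) == 0%N then a else b)
   else (if (j : nat) == 0%N then c else d)).

Lemma ord2P (i : 'I_2) : i = 0 \/ i = 1.
Proof. by case: i => [[|[|//]] hi]; [left|right]; apply/val_inj. Qed.

Lemma mx2E (M : 'M[R]_2) : M = mk2 (M 0 0) (M 0 1) (M 1 0) (M 1 1).
Proof.
by apply/matrixP => i j; rewrite mxE; case: (ord2P i) => ->; case: (ord2P j) => ->.
Qed.

Ltac mx2 := apply/matrixP; move=> [[|[|//]] ?] [[|[|//]] ?];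
  rewrite -?mulmxE ?mxE ?big_ord_recl ?big_ord0 ?mxE /=.

Lemma CH (a b c d : R) : mk2 a b c d * mk2 a b c d =
  (a + d) *: mk2 a b c d - (a * d - b * c) *: 1.
Proof. by mx2; ring. Qed.

Lemma cvg0_ev (F : R -> R) (eps : R) : F x @[x --> +oo] --> 0 -> 0 < eps ->
  exists M : R, forall t, M < t -> F t < eps.
Proof.
move=> /cvgrPdist_lt /[apply] -[M [_ HM]]; exists M => t /HM.
by rewrite sub0r normrN; apply: le_lt_trans; exact: ler_norm.
Qed.

Definition ecol (j : 'I_2) : 'cV[R]_2 := \col_k ((k == j)%:R).

Lemma ecol_nonneg j : nonneg_vec (ecol j).
Proof. by move=> k; rewrite mxE ler0n. Qed.

Lemma ecolE (M : 'M[R]_2) i j : (M *m ecol j) i 0 = M i j.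
Proof.
rewrite mxE (bigD1 j) //= mxE eqxx mulr1 big1 ?addr0 // => k /negbTE kj.
by rewrite mxE kj mulr0.
Qed.

Lemma asym_entry (G : R -> 'M[R]_2) (P Q : 'M[R]_2) (mu : R) : mu < 0 ->
  (forall t, G t = P + expR (t * mu) *: Q) ->
  (forall f, nonneg_vec f -> dpos (G t *m f) @[t --> +oo] --> 0) ->
  forall i j, 0 <= P i j.
Proof.
move=> mu0 HG HA i j; rewrite leNgt; apply/negP => Pneg.
set eps := - P i j / 2.
have e0 : 0 < eps by rewrite /eps; lra.
have [M HM] := @cvg0_ev _ _ (HA _ (ecol_nonneg j)) e0.
set q := `|Q i j|.
have q0 : 0 <= q by exact: normr_ge0.
have mq : 0 <= Num.max M 0 by rewrite le_max lexx orbT.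
set t := Num.max M 0 + 1 + q / (eps * - mu).
have qe : 0 <= q / (eps * - mu) by rewrite divr_ge0 // mulr_ge0 //; lra.
have tM : M < t.
  rewrite /t; have : M <= Num.max M 0 by rewrite le_max lexx.
  lra.
have := HM t tM; apply/negP; rewrite -leNgt.
apply: le_trans (dpos_ge _ i).
rewrite ecolE HG !mxE.
set e := expR (t * mu); set x := t * - mu.
have ex : e * expR x = 1 by rewrite /e /x -expRD mulrN addrN expR0.
have eg : 0 < e by exact: expR_gt0.
have h1 : e * (1 + x) <= 1.
  have := expR_ge1Dx x; nra.
have h2 : q <= eps * x.
  have -> : q = eps * (q / (eps * - mu) * - mu).
    by field; rewrite (lt_eqF mu0) (gt_eqF e0).
  apply: ler_wpM2l; first exact: ltW.
  rewrite /x; apply: ler_wpM2r; first lra.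
  rewrite /t; lra.
have h3 : e * q <= eps by nra.
have h4 : e * Q i j <= e * q by apply: ler_wpM2l; [exact: ltW | exact: ler_norm].
rewrite /eps in h3 *; lra.
Qed.

Lemma sb2 (a b c d : R) (r1 r2 : R[i]) :
  r1 + r2 = ((a + d)%:C)%C -> r1 * r2 = ((a * d - b * c)%:C)%C ->
  complex.Re r2 <= complex.Re r1 -> spectral_bound (mk2 a b c d) = complex.Re r1.
Proof. by move=> h1 h2 h3; apply: (@sb_val (mk2 a b c d) r1 r2); rewrite ?mxE. Qed.

Lemma main_pos (a b c d : R) : 0 < (a - d) ^+ 2 + 4 * (b * c) ->
  asymptotically_positive (mk2 a b c d) -> positive_semigroup (mk2 a b c d).
Proof.
move=> Dpos HAP.
pose r := Num.sqrt ((a - d) ^+ 2 + 4 * (b * c)).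
have r0 : 0 < r by rewrite sqrtr_gt0.
have rr : r * r = (a - d) ^+ 2 + 4 * (b * c) by rewrite -expr2 sqr_sqrtr // ltW.
pose l1 := (a + d + r) / 2; pose l2 := (a + d - r) / 2.
have sb : spectral_bound (mk2 a b c d) = l1.
  rewrite (@sb2 a b c d (l1%:C)%C (l2%:C)%C) //.
  - by rewrite -rmorphD /l1 /l2; congr (_%:C)%C; field.
  - by rewrite -rmorphM; congr (_%:C)%C; rewrite /l1 /l2; lra.
  - by rewrite /= /l1 /l2; lra.
pose X := mk2 (a - l2) b c (d - l2); pose Y := mk2 (l1 - a) (-b) (-c) (l1 - d).
pose P := r^-1 *: X; pose Q := r^-1 *: Y.
have XY : X * Y = 0 by rewrite /X /Y /l1 /l2; mx2; lra.
have YX : Y * X = 0 by rewrite /X /Y /l1 /l2; mx2; lra.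
have XpY : X + Y = r *: 1 by rewrite /X /Y /l1 /l2; mx2; lra.
have PQ : P * Q = 0 by rewrite /P /Q -scalerAl -scalerAr XY !scaler0.
have QP : Q * P = 0 by rewrite /P /Q -scalerAl -scalerAr YX !scaler0.
have PQ1 : P + Q = 1 by rewrite /P /Q -scalerDr XpY scalerA mulVf ?scale1r // gt_eqF.
have rn0 : r != 0 by rewrite gt_eqF.
have eA : forall t, t *: mk2 a b c d = (t * l1) *: P + (t * l2) *: Q.
  by move=> t; rewrite /P /Q /X /Y !scalerA /l1 /l2; mx2; field.
have eS : forall t, t *: (mk2 a b c d - l1%:M) = 0 *: P + (t * (l2 - l1)) *: Q.
  by move=> t; rewrite /P /Q /X /Y !scalerA /l1 /l2; mx2; field.
have Ppos := @asym_entry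
   (fun t => expmx (t *: (mk2 a b c d - (spectral_bound (mk2 a b c d))%:M)))
   P Q (l2 - l1) _ _ HAP.
have {Ppos} Ppos : forall i j, 0 <= P i j.
  apply: Ppos; first by rewrite /l1 /l2; lra.
  by move=> t; rewrite sb eS expmx_PQ // expR0 scale1r mulrC.
have p00 := Ppos 0 0; have p01 := Ppos 0 1; have p10 := Ppos 1 0; have p11 := Ppos 1 1.
rewrite /P /X !mxE /= in p00 p01 p10 p11.
move=> t t0 i j; rewrite eA expmx_PQ //.
have E12 : expR (t * l2) <= expR (t * l1).
  by rewrite ler_expR ler_wpM2l // /l1 /l2; lra.
have E2 : 0 < expR (t * l2) by exact: expR_gt0.
have ea : l1 - a = d - l2 by rewrite /l1 /l2; lra.
have ed : l1 - d = a - l2 by rewrite /l1 /l2; lra.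
have E1 : 0 <= expR (t * l1) by exact: ltW (expR_gt0 _).
case: (ord2P i) => ->; case: (ord2P j) => ->; rewrite /P /Q /X /Y !mxE /=.
- by rewrite ea; apply: addr_ge0; apply: mulr_ge0 => //; exact: ltW.
- by rewrite mulrN mulrN -mulrBl; apply: mulr_ge0 => //; rewrite subr_ge0.
- by rewrite mulrN mulrN -mulrBl; apply: mulr_ge0 => //; rewrite subr_ge0.
- by rewrite ed; apply: addr_ge0; apply: mulr_ge0 => //; exact: ltW.
Qed.
Lemma main_zero (a b c d : R) : (a - d) ^+ 2 + 4 * (b * c) = 0 ->
  rescaled_bounded (mk2 a b c d) -> positive_semigroup (mk2 a b c d).
Proof.
move=> D0 HB.
pose l := (a + d) / 2.
have sb : spectral_bound (mk2 a b c d) = l.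
  rewrite (@sb2 a b c d (l%:C)%C (l%:C)%C) //.
  - by rewrite -rmorphD /l; congr (_%:C)%C; field.
  - by rewrite -rmorphM; congr (_%:C)%C; rewrite /l; lra.
pose N := mk2 (a - l) b c (d - l).
have NN : N * N = 0 by rewrite /N /l; mx2; lra.
have eN : mk2 a b c d - l%:M = N by rewrite /N; mx2; rewrite ?mulr1n ?mulr0n; lra.
case: (pselect (exists i j, N i j != 0)) => [[i [j nij]] | H]; last first.
  have N0 : forall i j, N i j = 0.
    by move=> i j; apply/eqP/negPn/negP => nij; apply: H; exists i, j.
  have n00 := N0 0 0; have n01 := N0 0 1; have n10 := N0 1 0; have n11 := N0 1 1.
  rewrite /N !mxE /= in n00 n01 n10 n11.
  move=> t t0 i j.
  have -> : t *: mk2 a b c d = (t * l) *: 1 + 0 *: 0.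
    by rewrite scale0r addr0; mx2; rewrite ?mulr1n ?mulr0n; nra.
  rewrite expmx_PQ ?mulr0 ?mul0r ?addr0 // scaler0 addr0 mxE.
  by apply: mulr_ge0; [exact: ltW (expR_gt0 _) | rewrite mxE ler0n].
exfalso; case: HB => M HM; clearbody N.
have nN : 0 < `|N i j| by rewrite normr_gt0.
pose t := (`|M| + 2) / `|N i j|.
have t0 : 0 <= t by rewrite /t divr_ge0 // addr_ge0.
have := HM t t0; rewrite sb eN expmx_nil //.
apply/negP; rewrite -ltNge.
apply: (lt_le_trans _ (@entry_le_norm _ _ _ i j)).
rewrite !mxE addrC.
apply: (lt_le_trans _ (lerB_normD _ _)).
have e1 : `|(i == j)%:R : R| <= 1 by case: (i == j); rewrite ?normr1 ?normr0.
rewrite normrM (ger0_norm t0).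
have -> : t * `|N i j| = `|M| + 2 by rewrite /t divfK // gt_eqF.
have := ler_norm M; lra.
Qed.

Lemma aux_pi (p : R) (n : nat) : 2 <= p -> n%:R <= p + p *+ 2 *+ n.
Proof.
move=> hp; have hx : 0 <= n%:R :> R := ler0n _ _.
rewrite -[p *+ 2 *+ n]mulr_natr -[p *+ 2]mulr_natr; nra.
Qed.

Lemma cos_odd (n : nat) : cos (pi + pi *+ 2 *+ n) = - 1 :> R /\ sin (pi + pi *+ 2 *+ n) = 0 :> R.
Proof.
elim: n => [|n [IHc IHs]]; first by rewrite mulr0n addr0 cospi sinpi.
by rewrite mulrS addrCA addrC cosD2pi sinD2pi IHc IHs.
Qed.

Lemma main_neg (a b c d : R) : (a - d) ^+ 2 + 4 * (b * c) < 0 ->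
  asymptotically_positive (mk2 a b c d) -> False.
Proof.
move=> Dneg HAP.
pose w := Num.sqrt (- ((a - d) ^+ 2 + 4 * (b * c))) / 2.
have w0 : 0 < w by rewrite /w divr_gt0 // sqrtr_gt0 oppr_gt0.
have ww : w ^+ 2 = - ((a - d) ^+ 2 + 4 * (b * c)) / 4.
  rewrite /w expr_div_n sqr_sqrtr; last by rewrite oppr_ge0 ltW.
  by rewrite -natrX.
pose l := (a + d) / 2.
have sb : spectral_bound (mk2 a b c d) = l.
  rewrite (@sb2 a b c d (l +i* w)%C (l +i* (- w))%C) //.
  - by apply/eqP; rewrite eq_complex /=; apply/andP; split; apply/eqP; rewrite /l; lra.
  - by apply/eqP; rewrite eq_complex /=; apply/andP; split; apply/eqP; rewrite /l; lra.
pose B := mk2 (a - l) b c (d - l).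
have BB : B * B = (- w ^+ 2) *: 1 by rewrite /B /l ww; mx2; lra.
have eB : mk2 a b c d - l%:M = B by rewrite /B; mx2; rewrite ?mulr1n ?mulr0n; lra.
move: HAP; rewrite /asymptotically_positive sb eB => HAP.
have h2 : (0 : R) < 1 / 2 by lra.
have [M HM] := @cvg0_ev _ _ (HAP _ (ecol_nonneg 0)) h2.
have hn := truncnS_gt (M * w).
set n := (_.+1) in hn.
pose u : R := pi + pi *+ 2 *+ n.
pose t := u / w.
have tM : M < t.
  rewrite /t ltr_pdivlMr //; apply: (lt_le_trans hn).
  rewrite /u; apply: aux_pi; exact: pi_ge2.
have tE : w * t = u by rewrite /t mulrC divfK ?gt_eqF.
have [hc hs] := cos_odd n.
rewrite -/u in hc hs.
clearbody t u.
have := HM t tM; apply/negP; rewrite -leNgt.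
apply: le_trans; last exact: dpos_ge _ 0.
rewrite ecolE (@expmx_rot B w t (lt0r_neq0 w0) BB) tE hc hs scale0r addr0 !mxE /=.
lra.
Qed.

End S.

Theorem proposition9p2 (R : realType) (A : 'M[R]_2) :
  rescaled_bounded A -> asymptotically_positive A -> positive_semigroup A.
Proof.
move=> HB HAP; move: HB HAP; rewrite (@mx2E R A).
move: (A 0 0) (A 0 1) (A 1 0) (A 1 1) => a b c d HB HAP.
have [Dpos|Dneg|D0] := ltgtP 0 ((a - d) ^+ 2 + 4 * (b * c)).
- exact: main_pos.
- by case: (@main_neg R a b c d Dneg HAP).
- exact: main_zero.
Qed.
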